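(* Let $n\ge 3$ and $\mathbf h\in\mathbb{R}^{\binom{n+1}{2}}$, decomposed as $\mathbf h=(\mathbf h_0,\mathbf h_1,\mathbf h_2)$. Assume $J_{n,2}\mathbf h\ge 0$ and $\mathbf h_2\not\ge 0$. Then $R(J_{n,2}\mathbf h)\ge 3+R_{n-1,2}$.
   Context: For a real vector $\mathbf x$, $R(\mathbf x)$ is the number of nonzero components; inequalities are componentwise and $\mathbf x\not\ge0$ means some component is negative. $J_{m,j}$ is the matrix, with respect to the left lexicographic bases of degree-$j$ and degree-$(j+1)$ monomials in $m$ variables, of multiplication by the sum of the variables. If $\mathbf h$ is the coordinate vector of $A(x)=x_1^2A_0+x_1A_1(x_2,\dots,x_n)+A_2(x_2,\dots,x_n)$ ($A_j$ homogeneous of degree $j$), $\mathbf h_j$ is the coordinate vector of $A_j$ in the left lexicographic basis of degree-$j$ monomials in $x_2,\dots,x_n$. For $m,d\ge1$, $R_{m,d}:=\min\{R(J_{m,d}\mathbf g): \mathbf g\in\mathbb{R}^{\binom{m+d-1}{d}},\ \mathbf g\not\ge 0,\ J_{m,d}\mathbf g\ge 0\}$. *)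

(* Defs.v *)
From HB Require Import structures.
From mathcomp Require Import all_boot all_order all_algebra.
From mathcomp Require Import mpoly.
From mathcomp Require Import reals.
From Stdlib Require Import ClassicalEpsilon.

Set Implicit Arguments. Unset Strict Implicit. Unset Printing Implicit Defensive.
Import Order.TTheory GRing.Theory Num.Theory.
Local Open Scope ring_scope.

Definition sumX (R : realType) (m : nat) : {mpoly R[m]} := \sum_(i < m) 'X_i.

(* A homogeneous polynomial of degree d in m variables is identified with its
   coordinate vector g in R^{binom(m+d-1,d)} (coefficients on the degree-d
   monomials); the vector J_{m,d} g is the coordinate vector of (sumX m) * g
   on the degree-(d+1) monomials. *)
Definition Jmul (R : realType) (m : nat) (g : {mpoly R[m]}) : {mpoly R[m]} :=
  sumX R m * g.

Definition vnonneg (R : realType) (m : nat) (p : {mpoly R[m]}) : Prop :=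
  forall mm : 'X_{1..m}, 0 <= p@_mm.

Definition Rcount (R : realType) (m : nat) (p : {mpoly R[m]}) : nat :=
  size (msupp p).

Definition Rvalue (R : realType) (m d k : nat) : Prop :=
  exists g : {mpoly R[m]},
    [/\ g \is d.-homog, ~ vnonneg g, vnonneg (Jmul g) & Rcount (Jmul g) = k].

Definition Rvalueb (R : realType) (m d : nat) : pred nat :=
  fun k => if excluded_middle_informative (Rvalue R m d k) then true else false.

Lemma Rvalueb_ex (R : realType) (m d : nat) :
  (exists k, Rvalue R m d k) -> exists k, Rvalueb R m d k.
Proof.
move=> [k Hk]; exists k; rewrite /Rvalueb.
by case: excluded_middle_informative.
Qed.

(* R_{m,d} := min { R(J_{m,d} g) : g not >= 0, J_{m,d} g >= 0 }
   (set to 0 if the set is empty, which never happens for m >= 2). *)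
Definition Rmin (R : realType) (m d : nat) : nat :=
  match excluded_middle_informative (exists k, Rvalue R m d k) with
  | left H => ex_minn (Rvalueb_ex H)
  | right _ => 0%N
  end.

(* Main.v *)
Require Import Defs.
From HB Require Import structures.
From mathcomp Require Import all_boot all_order all_algebra.
From mathcomp Require Import mpoly.
From mathcomp Require Import reals.
From mathcomp Require Import lra zify.
From Stdlib Require Import ClassicalEpsilon.
Set Implicit Arguments. Unset Strict Implicit. Unset Printing Implicit Defensive.
Import Order.TTheory GRing.Theory Num.Theory.
Local Open Scope ring_scope.

Section Coef.
Variable (R : realType) (n : nat).
Implicit Types (p : {mpoly R[n]}) (m : 'X_{1..n}).

Lemma mcoeff_XiM p (i : 'I_n) m :
  ('X_i * p)@_m = if (0 < m i)%N then p@_(m - U_(i))%MM else 0.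
Proof.
rewrite -commr_mpolyX; case: ifP => h.
  have E : m = (U_(i) + (m - U_(i)))%MM.
    apply/mnmP => j; rewrite !(mnmDE, mnmBE, mnm1E).
    case: eqP => [<-|_]; lia.
  by rewrite {1}E mcoeffMX.
apply/eqP; rewrite mcoeff_eq0 (perm_mem (msuppMX _ _)); apply/negP.
case/mapP => m' _ E; move: h; rewrite E mnmDE mnm1E eqxx; lia.
Qed.

Lemma mcoeff_J p m :
  (Jmul p)@_m = \sum_(i < n) (if (0 < m i)%N then p@_(m - U_(i))%MM else 0).
Proof.
rewrite /Jmul /sumX mulr_suml raddf_sum /=.
by apply: eq_bigr => i _; rewrite mcoeff_XiM.
Qed.

Definition UU (a b c : 'I_n) : 'X_{1..n} := (U_(a) + U_(b) + U_(c))%MM.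
Definition U2 (a b : 'I_n) : 'X_{1..n} := (U_(a) + U_(b))%MM.

Lemma J3 p a b c : a != b -> a != c -> b != c ->
  (Jmul p)@_(UU a b c) = p@_(U2 b c) + p@_(U2 a c) + p@_(U2 a b).
Proof.
move=> ab ac bc; rewrite mcoeff_J (bigD1 a) //= (bigD1 b) //=; last by rewrite eq_sym.
rewrite (bigD1 c) /=; last by rewrite eq_sym ac eq_sym bc.
rewrite big1 ?addr0; last first.
  move=> i /andP [/andP [ia ib] ic]; rewrite /UU !(mnmDE, mnm1E).
  by rewrite ![_ == i]eq_sym (negbTE ia) (negbTE ib) (negbTE ic).
have ba : b != a by rewrite eq_sym.
have ca : c != a by rewrite eq_sym.
have cb : c != b by rewrite eq_sym.
rewrite /UU !(mnmDE, mnm1E) !eqxx (negbTE ab) (negbTE ac) (negbTE bc).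
rewrite (negbTE ba) (negbTE ca) (negbTE cb) /=.
rewrite addrA; congr (_ + _ + _); congr (p@_ _);
  apply/mnmP => j; rewrite /U2 !(mnmDE, mnmBE, mnm1E); lia.
Qed.

Lemma J2 p a c : a != c ->
  (Jmul p)@_(UU a a c) = p@_(U2 a c) + p@_(U2 a a).
Proof.
move=> ac; rewrite mcoeff_J (bigD1 a) //= (bigD1 c) /=; last by rewrite eq_sym ac.
rewrite big1 ?addr0; last first.
  move=> i /andP [ia ic]; rewrite /UU !(mnmDE, mnm1E).
  by rewrite ![_ == i]eq_sym (negbTE ia) (negbTE ic).
have ca : c != a by rewrite eq_sym.
rewrite /UU !(mnmDE, mnm1E) !eqxx (negbTE ac) (negbTE ca) /=.
congr (_ + _); congr (p@_ _);
  apply/mnmP => j; rewrite /U2 !(mnmDE, mnmBE, mnm1E); lia.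
Qed.

Lemma J1 p a : (Jmul p)@_(UU a a a) = p@_(U2 a a).
Proof.
rewrite mcoeff_J (bigD1 a) //=.
rewrite big1 ?addr0; last first.
  by move=> i ia; rewrite /UU !(mnmDE, mnm1E) eq_sym (negbTE ia).
rewrite /UU !(mnmDE, mnm1E) !eqxx /=.
congr (p@_ _); apply/mnmP => j; rewrite /U2 !(mnmDE, mnmBE, mnm1E); lia.
Qed.
End Coef.
Section Up.
Variable (R : realType) (q : nat).

Definition up (k : 'X_{1..q}) : 'X_{1..q.+1} :=
  [multinom (if unlift ord0 j is Some i then k i else 0%N) | j < q.+1].

Lemma up0 k : up k ord0 = 0%N.
Proof. by rewrite mnmE unlift_none. Qed.

Lemma upS k i : up k (lift ord0 i) = k i.
Proof. by rewrite mnmE liftK. Qed.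

Lemma up_inj : injective up.
Proof. by move=> k1 k2 E; apply/mnmP => i; rewrite -!upS E. Qed.

Lemma mdeg_up k : mdeg (up k) = mdeg k.
Proof.
rewrite !mdegE big_ord_recl up0 add0n.
by apply: eq_bigr => i _; rewrite upS.
Qed.

Lemma upB k i : (up k - U_(lift ord0 i))%MM = up (k - U_(i))%MM.
Proof.
apply/mnmP => j; case: (unliftP ord0 j) => [j'|] ->.
  by rewrite mnmBE !upS mnmBE !mnm1E (inj_eq lift_inj).
by rewrite mnmBE !up0 sub0n.
Qed.

Lemma up_down (m : 'X_{1..q.+1}) : m ord0 = 0%N ->
  m = up [multinom m (lift ord0 i) | i < q].
Proof.
move=> h; apply/mnmP => j; case: (unliftP ord0 j) => [j'|] ->.
  by rewrite upS mnmE.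
by rewrite up0.
Qed.

Definition Bpoly (A : {mpoly R[q.+1]}) : {mpoly R[q]} :=
  \sum_(m : 'X_{1..q < 3}) (A@_(up m) *: 'X_[m]).

Lemma coefB (A : {mpoly R[q.+1]}) k : A \is 2.-homog ->
  (Bpoly A)@_k = A@_(up k).
Proof.
move=> hA; case: (ltnP (mdeg k) 3) => h; first by rewrite /Bpoly (mcoeff_mpoly (fun m => A@_(up m))).
rewrite (dhomog_nemf_coeff hA); last by rewrite /= mdeg_up; apply/eqP; lia.
rewrite /Bpoly raddf_sum big1 // => m _.
rewrite /= mcoeffZ mcoeffX; case: eqP => [E|]; last by rewrite mulr0.
by move: (bmdeg m); rewrite E; lia.
Qed.

Lemma coefJB (A : {mpoly R[q.+1]}) k : A \is 2.-homog ->
  (Jmul (Bpoly A))@_k = (Jmul A)@_(up k).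
Proof.
move=> hA; rewrite !mcoeff_J big_ord_recl up0 /= add0r.
by apply: eq_bigr => i _; rewrite upS upB coefB.
Qed.

End Up.

Lemma Rmin_le (R : realType) m d k : Rvalue R m d k -> (Rmin R m d <= k)%N.
Proof.
move=> hk; rewrite /Rmin; case: excluded_middle_informative => [H|[]]; last by exists k.
case: ex_minnP => k0 _ Hmin; apply: Hmin; rewrite /Rvalueb.
by case: excluded_middle_informative.
Qed.

Lemma count3 (R : realType) q (A : {mpoly R[q.+1]}) (m1 m2 m3 : 'X_{1..q.+1}) :
  A \is 2.-homog ->
  uniq [:: m1; m2; m3] -> all (fun m : 'X_{1..q.+1} => 0 < m ord0)%N [:: m1; m2; m3] ->
  all (fun m => (Jmul A)@_m != 0) [:: m1; m2; m3] ->
  (3 + size (msupp (Jmul (Bpoly A))) <= size (msupp (Jmul A)))%N.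
Proof.
move=> hA hu hpos hnz.
set s := [:: m1; m2; m3] ++ map (@up q) (msupp (Jmul (Bpoly A))).
have -> : (3 + size (msupp (Jmul (Bpoly A))))%N = size s by rewrite /s size_cat size_map.
apply: uniq_leq_size.
  rewrite /s cat_uniq hu (map_inj_uniq (@up_inj q)) msupp_uniq /= andbT.
  apply/hasPn => x /mapP [k _ ->]; apply/negP => H.
  by move/allP: hpos => /(_ _ H); rewrite up0.
move=> x; rewrite /s mem_cat => /orP [H|].
  by rewrite mcoeff_msupp; move/allP: hnz; apply.
case/mapP => k; rewrite !mcoeff_msupp => hk ->.
by rewrite -coefJB.
Qed.

Lemma neq_at n (x : 'I_n) (m1 m2 : 'X_{1..n}) : m1 x != m2 x -> m1 != m2.
Proof. by apply: contra => /eqP ->. Qed.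

Lemma U2C n (a b : 'I_n) : U2 a b = U2 b a.
Proof. by rewrite /U2 addmC. Qed.

Lemma core (R : realType) q (A : {mpoly R[q.+1]}) (mm : 'X_{1..q.+1}) :
  (2 <= q)%N -> A \is 2.-homog -> vnonneg (Jmul A) -> mm ord0 = 0%N -> A@_mm < 0 ->
  exists m1 m2 m3 : 'X_{1..q.+1},
    [/\ uniq [:: m1; m2; m3], all (fun m : 'X_{1..q.+1} => 0 < m ord0)%N [:: m1; m2; m3]
      & all (fun m => (Jmul A)@_m != 0) [:: m1; m2; m3]].
Proof.
move=> hq hA P0 hmm0 hneg.
have [u [v [u0 v0 Emm]]] : exists u v : 'I_q.+1, [/\ u != ord0, v != ord0 & mm = U2 u v].
  have hdeg : mdeg mm = 2%N.
    apply: (dhomog_mf hA); rewrite mcoeff_msupp; exact: ltr0_neq0.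
  case: (pickP (fun i => 0 < mm i)%N) => [u hu|H]; last first.
    have : mm = 0%MM by apply/mnmP => i; rewrite mnm0E; move: (H i) => /=; lia.
    by move=> E; move: hdeg; rewrite E mdeg0.
  have le : (U_(u) <= mm)%MM.
    by apply/mnm_lepP => j; rewrite mnm1E; case: eqP => [<-|]; [lia|].
  have E := submK le.
  have : mdeg (mm - U_(u)) == 1%N by move: hdeg; rewrite -{1}E mdegD mdeg1; lia.
  case/mdeg1P => v /eqP hv.
  have Emm : mm = U2 u v by rewrite /U2 -E hv addmC.
  exists u, v; split => //.
    by apply/eqP => E0; move: hu; rewrite E0 hmm0.
  apply/eqP => E0; move: hmm0; rewrite Emm /U2 mnmDE !mnm1E -E0 eqxx; lia.
have [w [w0 hw]] : exists w : 'I_q.+1, w != ord0 /\ 0 < A@_(U2 ord0 w).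
  case: (eqVneq u v) => [E|uv].
    move: hneg; rewrite Emm -E => hneg.
    have := P0 (UU u u ord0); rewrite J2 // => h.
    have E2 : U2 u ord0 = U2 ord0 u by rewrite U2C.
    rewrite E2 in h.
    by exists u; split => //; lra.
  have := P0 (UU ord0 u v); rewrite J3 ?(eq_sym ord0) // => h.
  move: hneg; rewrite Emm => hneg.
  have [h1|h1] := ltrP 0 (A@_(U2 ord0 u)); first by exists u.
  by exists v; split => //; lra.
have e1 : (w == ord0) = false by apply: negbTE.
have e2 : (ord0 == w) = false by rewrite eq_sym; apply: negbTE.
have hc := P0 (UU ord0 ord0 ord0); rewrite J1 in hc.
have hbww := P0 (UU w w w); rewrite J1 in hbww.
have hm1 : (Jmul A)@_(UU ord0 ord0 w) != 0.
  by rewrite J2 ?(eq_sym ord0) //; apply/lt0r_neq0; lra.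
have hm2 : (Jmul A)@_(UU w w ord0) != 0.
  have E2 : U2 w ord0 = U2 ord0 w by rewrite U2C.
  by rewrite J2 // E2; apply/lt0r_neq0; lra.
have [hc0|hc0] := ltrP 0 (A@_(U2 ord0 ord0)).
  exists (UU ord0 ord0 w), (UU w w ord0), (UU ord0 ord0 ord0); split.
  - rewrite /= !inE !negb_or !andbT; repeat (apply/andP; split);
      apply: (@neq_at _ ord0); by rewrite /UU !(mnmDE, mnm1E) !eqxx ?e1 ?e2.
  - by rewrite /= /UU !(mnmDE, mnm1E) !eqxx ?e1 ?e2.
  - by rewrite /= hm1 hm2 J1 /= (gt_eqF hc0).
have h0 : (0 < q)%N by apply: ltnW.
have h1 : (1 < q)%N by [].
have [k [k0 kw]] : exists k : 'I_q.+1, k != ord0 /\ k != w.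
  have nl : forall j : 'I_q, lift ord0 j != ord0 by move=> j; rewrite eq_sym neq_lift.
  case: (eqVneq w (lift ord0 (Ordinal h0))) => E.
    exists (lift ord0 (Ordinal h1)); split => //.
    by rewrite E (inj_eq lift_inj).
  by exists (lift ord0 (Ordinal h0)); split => //; rewrite eq_sym.
have e3 : (k == ord0) = false by apply: negbTE.
have e4 : (ord0 == k) = false by rewrite eq_sym; apply: negbTE.
have e5 : (k == w) = false by apply: negbTE.
have e6 : (w == k) = false by rewrite eq_sym; apply: negbTE.
have p1 := P0 (UU k k w); rewrite J2 // in p1.
have p2 := P0 (UU ord0 ord0 k); rewrite J2 ?(eq_sym ord0) // in p2.
have p3 : (Jmul A)@_(UU ord0 w k) = A@_(U2 w k) + A@_(U2 ord0 k) + A@_(U2 ord0 w).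
  by rewrite J3 ?(eq_sym ord0) // eq_sym.
have p4 : (Jmul A)@_(UU k k ord0) = A@_(U2 ord0 k) + A@_(U2 k k).
  by rewrite J2 // U2C.
have ekw : U2 k w = U2 w k by rewrite U2C.
rewrite ekw in p1.
case: (eqVneq ((Jmul A)@_(UU ord0 w k)) 0) => h3.
  exists (UU ord0 ord0 w), (UU w w ord0), (UU k k ord0); split.
  - rewrite /= !inE !negb_or !andbT; repeat (apply/andP; split);
      [apply: (@neq_at _ ord0)|apply: (@neq_at _ ord0)|apply: (@neq_at _ w)];
      by rewrite /UU !(mnmDE, mnm1E) !eqxx ?e1 ?e2 ?e3 ?e4 ?e5 ?e6.
  - by rewrite /= /UU !(mnmDE, mnm1E) !eqxx ?e1 ?e2 ?e3 ?e4.
  - rewrite /= hm1 hm2 /= andbT; apply/eqP => h4.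
    have h3' : A@_(U2 w k) + A@_(U2 ord0 k) + A@_(U2 ord0 w) = 0.
      by rewrite -p3; first [exact: h3 | exact/eqP].
    rewrite p4 in h4; clear -h3' h4 p1 p2 hc0 hc hw; lra.
exists (UU ord0 ord0 w), (UU w w ord0), (UU ord0 w k); split.
- rewrite /= !inE !negb_or !andbT; repeat (apply/andP; split);
    [apply: (@neq_at _ ord0)|apply: (@neq_at _ ord0)|apply: (@neq_at _ w)];
    by rewrite /UU !(mnmDE, mnm1E) !eqxx ?e1 ?e2 ?e3 ?e4 ?e5 ?e6.
- by rewrite /= /UU !(mnmDE, mnm1E) !eqxx ?e1 ?e2 ?e3 ?e4.
- by rewrite /= hm1 hm2 h3.
Qed.

Unset Implicit Arguments. Set Strict Implicit.

Theorem corollary4p2 (R : realType) (n : nat) (A : {mpoly R[n]}) :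
  (3 <= n)%N ->
  A \is 2.-homog ->
  vnonneg (Jmul A) ->
  (exists mm : 'X_{1..n}, (forall i : 'I_n, val i = 0%N -> mm i = 0%N) /\ A@_mm < 0) ->
  (3 + Rmin R n.-1 2 <= Rcount (Jmul A))%N.
Proof.
case: n A => [|q] A // hn hA hP [mm [hmm hneg]] /=.
have hmm0 : mm ord0 = 0%N by apply: hmm.
have hq : (2 <= q)%N by [].
have [m1 [m2 [m3 [hu hpos hnz]]]] := core hq hA hP hmm0 hneg.
apply: leq_trans (count3 hA hu hpos hnz).
rewrite leq_add2l; apply: Rmin_le.
exists (Bpoly A); split => //.
- apply/dhomogP => k; rewrite mcoeff_msupp coefB // -mcoeff_msupp.
  by move/(dhomog_mf hA); rewrite /= mdeg_up.
- move/(_ [multinom mm (lift ord0 i) | i < q]); rewrite coefB // -up_down //.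
  by rewrite leNgt hneg.
- by move=> k; rewrite coefJB.
Qed.
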